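(* Let $G$ be a second countable locally compact abelian group, $\varLambda\subseteq G$ a set of finite local complexity, and $\mathcal{A}=(A_n)_n$ a van Hove sequence. Let $F_n=\varLambda\cap A_n$ and assume (a) $\lim_{n\to\infty}\mathrm{card}(F_n)=\infty$, and (b) for all $0\ne t\in\varLambda-\varLambda$, $\mathrm{card}(\varLambda\cap(-t+\varLambda))<\infty$. Then the counting autocorrelation of $\varLambda$ exists with respect to $\mathcal{A}$ and $\gamma_{\mathrm{count}}=\delta_0$.
   Context: Finite local complexity: $\varLambda-\varLambda$ is locally finite (every compact set meets it in finitely many points). A van Hove sequence is a sequence of compact sets $A_n$ of positive Haar measure with $\mathrm{vol}(\partial^K A_n)/\mathrm{vol}(A_n)\to0$ for all compact $K$, where $\partial^K A=((A+K)\setminus A^\circ)\cup((\overline{G\setminus A}-K)\cap A)$. For finite $F$, $\gamma_F=\frac{1}{\mathrm{card}(F)}\sum_{x,y\in F}\delta_{x-y}$ if $F\ne\emptyset$, $\gamma_\emptyset=0$; the counting autocorrelation is the vague limit of $\gamma_{F_n}$. *)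

(* Defs.v *)
From HB Require Import structures.
From mathcomp Require Import all_boot all_algebra.
From mathcomp Require Import finmap.
From mathcomp Require Import all_classical all_reals all_analysis.
Set Implicit Arguments. Unset Strict Implicit. Unset Printing Implicit Defensive.
Import GRing.Theory Num.Theory numFieldNormedType.Exports.
Local Open Scope classical_set_scope.
Local Open Scope ring_scope.

(* An abelian topological group G is a [topologicalZmodType].  To equip it
   with its Borel sigma-algebra (the sigma-algebra generated by the open
   sets) we need a pointed copy of G (pointed at 0). *)
Definition ptG (G : topologicalZmodType) : Type := G.
HB.instance Definition _ (G : topologicalZmodType) := Choice.on (ptG G).
HB.instance Definition _ (G : topologicalZmodType) := isPointed.Build (ptG G) 0.

Definition borel_space (G : topologicalZmodType) :=
  g_sigma_algebraType (T := ptG G) (@open G).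

Section Defs.
Variables (R : realType) (G : topologicalZmodType).

Definition diffset (L : set G) : set G := [set x - y | x in L & y in L].

Definition FLC (L : set G) : Prop :=
  forall K : set G, compact K -> finite_set (K `&` diffset L).

Definition is_haar (mu : {measure set (borel_space G) -> \bar R}) : Prop :=
  [/\ forall (x : G) (A : set (borel_space G)), measurable A ->
        mu ((fun a : G => x + a) @` A) = mu A,
      forall K : set G, compact K -> (mu K < +oo)%E,
      forall U : set G, open U -> U !=set0 -> (0 < mu U)%E,
      forall A : set (borel_space G), measurable A ->
        mu A = ereal_inf [set mu U | U in [set U : set G | open U /\ A `<=` U]]
    & forall U : set G, open U ->
        mu U = ereal_sup [set mu K | K in [set K : set G | compact K /\ K `<=` U]]].

Definition kboundary (K A : set G) : set G :=
  ([set a + k | a in A & k in K] `\` interior A) `|`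
  ([set x - k | x in closure (~` A) & k in K] `&` A).

Definition van_Hove (mu : {measure set (borel_space G) -> \bar R})
    (A : nat -> set G) : Prop :=
  (forall n, compact (A n) /\ (0 < mu (A n))%E) /\
  (forall K : set G, compact K ->
     (fun n => fine (mu (kboundary K (A n))) / fine (mu (A n))) @ \oo --> (0 : R)).

Definition card_fin (F : set G) : nat := #|` fset_set F|%fset.

(* gamma_F applied to a test function f:
   gamma_F = 1/card(F) sum_{x,y in F} delta_{x-y}  (and gamma_empty = 0). *)
Definition gammaF (F : set G) (f : G -> R) : R :=
  if card_fin F == 0%N then 0
  else (card_fin F)%:R^-1 *
       \sum_(x <- fset_set F) \sum_(y <- fset_set F) f (x - y).

Definition Cc (f : G -> R) : Prop :=
  continuous f /\ compact (closure [set x | f x != 0]).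

End Defs.

(* Main.v *)
Require Import Defs.
From HB Require Import structures.
From mathcomp Require Import all_boot all_algebra.
From mathcomp Require Import finmap.
From mathcomp Require Import all_classical all_reals all_analysis.
Import order.Order.TTheory GRing.Theory Num.Theory numFieldNormedType.Exports.
Local Open Scope classical_set_scope.
Local Open Scope ring_scope.

Lemma sum_sub (T : choiceType) (R : realDomainType) (S Q : {fset T}) (h : T -> R) :
  (forall x, 0 <= h x) -> (forall x, x \in S -> x \notin Q -> h x = 0) ->
  \sum_(x <- S) h x <= \sum_(x <- Q) h x.
Proof.
move=> h0 hS.
rewrite (bigID (fun x => x \in Q)) /=.
rewrite [X in _ + X]big_seq_cond.
rewrite [X in _ + X]big1 ?addr0; last first.
  by move=> x /andP[xS xQ]; apply: hS.
rewrite [X in _ <= X](bigID (fun x => x \in S)) /=.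
have -> : \sum_(i <- S | i \in Q) h i = \sum_(i <- Q | i \in S) h i.
  rewrite -[LHS]big_filter -[RHS]big_filter; apply: perm_big; apply: uniq_perm.
  - exact: filter_uniq (fset_uniq _).
  - exact: filter_uniq (fset_uniq _).
  by move=> x; rewrite !mem_filter andbC.
by rewrite lerDl sumr_ge0.
Qed.

Theorem lemma4p1 (R : realType) (G : topologicalZmodType)
    (mu : {measure set (borel_space G) -> \bar R})
    (L : set G) (A : nat -> set G) :
  hausdorff_space G -> @second_countable G -> locally_compact [set: G] ->
  is_haar mu ->
  FLC L ->
  van_Hove mu A ->
  (forall M : nat, exists N : nat, forall n : nat,
      (N <= n)%N -> (M <= card_fin (L `&` A n))%N) ->
  (forall t : G, diffset L t -> t != 0 ->
      finite_set (L `&` [set - t + y | y in L])) ->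
  forall f : G -> R, Cc f ->
    (fun n => gammaF (L `&` A n) f) @ \oo --> f 0.
Proof.
move=> _ _ _ _ Hflc _ Hcard Hfin f [fcont fcpt].
pose K := closure [set x | f x != 0].
have Tfin : finite_set (K `&` diffset L) := Hflc K fcpt.
pose T := (K `&` diffset L) `\ 0.
pose Y := fun t => L `&` [set - t + y | y in L].
pose Q := L `&` \bigcup_(t in T) (Y t `|` [set t + y | y in Y t]).
have Qfin : finite_set Q.
  apply: finite_setIr; apply: bigcup_finite; first exact: finite_setD.
  move=> t [[_ Dt] t0]; have Yf : finite_set (Y t) by apply: Hfin => //; apply/eqP.
  by rewrite finite_setU; split => //; apply: finite_image.
have HQ : forall x y, L x -> L y -> x != y -> f (x - y) != 0 -> Q x /\ Q y.
  move=> x y Lx Ly xy fxy.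
  have TT : T (x - y).
    split; last by move=> /= /eqP; rewrite subr_eq0; apply/negP.
    split; first exact: subset_closure.
    by exists x => //; exists y.
  have Yy : Y (x - y) y by split => //; exists x => //; rewrite opprB subrK.
  split; split => //; exists (x - y) => //.
    by right; exists y => //; rewrite subrK.
  by left.
pose g := fun x y : G => if x == y then 0 else `|f (x - y)|.
have g0 : forall x y, 0 <= g x y by move=> x y; rewrite /g; case: ifP.
pose B := \sum_(x <- fset_set Q) \sum_(y <- fset_set Q) g x y.
have B0 : 0 <= B by apply: sumr_ge0 => x _; apply: sumr_ge0.
have key : forall n, card_fin (L `&` A n) != 0%N ->
    `|f 0 - gammaF (L `&` A n) f| <= B / (card_fin (L `&` A n))%:R.
  move=> n hc.
  set F := L `&` A n in hc *.
  have Ffin : finite_set F.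
    apply: contrapT => nf; move: hc; rewrite /card_fin /fset_set.
    by case: pselect => // _; rewrite cardfs0.
  pose S := fset_set F.
  have SL : forall x, x \in S -> L x.
    by move=> x; rewrite /S in_fset_set // inE => -[].
  have cS : (card_fin F)%:R = \sum_(x <- S) (1 : R).
    by rewrite /card_fin card_fset_sum1 natr_sum.
  have c0 : 0 < (card_fin F)%:R :> R by rewrite ltr0n lt0n.
  pose E := \sum_(x <- S) \sum_(y <- S | y != x) f (x - y).
  have gE : gammaF F f = f 0 + (card_fin F)%:R^-1 * E.
    rewrite /gammaF (negbTE hc).
    have -> : \sum_(x <- S) \sum_(y <- S) f (x - y) = (card_fin F)%:R * f 0 + E.
      rewrite cS big_distrl /= -big_split /=; apply: eq_big_seq => x xS.
      by rewrite (bigD1_seq x) //= ?fset_uniq // subrr mul1r.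
    by rewrite mulrDr mulrA mulVf ?mul1r ?(lt0r_neq0 c0).
  rewrite gE opprD addrA subrr add0r normrN normrM ger0_norm ?invr_ge0 ?(ltW c0) //.
  rewrite [B / _]mulrC ler_pM2l ?invr_gt0 //.
  apply: (le_trans (ler_norm_sum _ _ _)).
  apply: (le_trans (ler_sum _ (fun x _ => ler_norm_sum _ _ _))).
  have -> : \sum_(i <- S) \sum_(y <- S | y != i) `|f (i - y)| =
            \sum_(i <- S) \sum_(y <- S) g i y.
    apply: eq_bigr => x _; rewrite big_mkcond /=; apply: eq_bigr => y _.
    by rewrite /g [y == x]eq_sym; case: (x == y).
  apply: le_trans (_ : \sum_(x <- S) \sum_(y <- fset_set Q) g x y <= _).
    rewrite [X in X <= _]big_seq [X in _ <= X]big_seq; apply: ler_sum => x xS; apply: sum_sub => // y yS yQ.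
    rewrite /g; case: eqP => // /eqP xy.
    apply/eqP; rewrite normr_eq0; apply: contraNT yQ => fxy.
    by rewrite in_fset_set // inE; have [] := HQ x y (SL x xS) (SL y yS) xy fxy.
  apply: sum_sub => [x|x xS xQ]; first by apply: sumr_ge0.
  rewrite big_seq big1 // => y yQ; rewrite /g; case: eqP => // /eqP xy.
  apply/eqP; rewrite normr_eq0; apply: contraNT xQ => fxy.
  have Ly : L y by move: yQ; rewrite in_fset_set // inE => -[].
  by rewrite in_fset_set // inE; have [] := HQ x y (SL x xS) Ly xy fxy.
apply/cvgrPdist_le => e e0.
have [N HN] := Hcard (Num.truncn (B / e)).+1.
exists N => // n /= Nn.
have Hc := HN n Nn.
apply: (le_trans (key n _)); first by rewrite -lt0n; apply: leq_trans Hc.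
rewrite ler_pdivrMr; last by rewrite ltr0n; apply: leq_trans Hc.
rewrite mulrC -ler_pdivrMr //.
apply: (le_trans (ltW (truncnS_gt _))).
by rewrite ler_nat.
Qed.
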